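(* Let $G=(V,E)$ be a finite graph with boundary $B\subseteq V$, $|B|\ge2$, such that $B$ is an independent set of $G$. Let $d_1\le d_2\le\cdots\le d_{|B|}$ be the degrees (in $G$) of the boundary vertices, sorted in non-decreasing order. Then $$\sigma_k(G,B)\le d_k,\qquad k=1,2,\ldots,|B|.$$
   Context: $G=(V,E)$ is a finite undirected graph. A boundary is a subset $B\subseteq V$ with $|B|\ge2$. For $f:V\to\mathbb{R}$, $f\neq0$, the Rayleigh quotient is $R(f)=\frac{\sum_{\{x,y\}\in E}(f(x)-f(y))^2}{\sum_{x\in B}f(x)^2}$, interpreted as $+\infty$ if $f$ vanishes on $B$. For $1\le k\le|B|$, the $k$-th Steklov eigenvalue is $\sigma_k(G,B)=\min_{W\subseteq\mathbb{R}^V,\dim W=k}\max_{0\ne f\in W}R(f)$. *)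

(* Defs.v *)
From HB Require Import structures.
From mathcomp Require Import all_boot all_order all_algebra.
From mathcomp Require Import boolp classical_sets reals constructive_ereal ereal.
Set Implicit Arguments. Unset Strict Implicit. Unset Printing Implicit Defensive.
Import Order.TTheory GRing.Theory Num.Theory.
Local Open Scope ring_scope.
Local Open Scope classical_set_scope.

(* A finite (simple, undirected) graph: vertex set T (a finType), adjacency
   relation [e] assumed symmetric and irreflexive in the theorem. *)

Section Steklov.
Variables (R : realType) (T : finType) (e : rel T).

(* sum over unordered edges {x,y} (each edge counted once, using the
   enumeration rank of T to order the endpoints) of (f x - f y)^2 *)
Definition dirichlet (f : {ffun T -> R^o}) : R :=
  \sum_(x : T) \sum_(y : T | (enum_rank x < enum_rank y)%N && e x y)
     (f x - f y) ^+ 2.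

Definition bnorm (B : {set T}) (f : {ffun T -> R^o}) : R :=
  \sum_(x in B) f x ^+ 2.

Definition rayleigh (B : {set T}) (f : {ffun T -> R^o}) : \bar R :=
  if [forall x in B, f x == 0] then +oo%E
  else ((dirichlet f) / (bnorm B f))%:E.

Definition steklov (B : {set T}) (k : nat) : \bar R :=
  ereal_inf [set ereal_sup [set rayleigh B f | f in [set f | (f \in W) /\ f != 0]]
            | W in [set W : {vspace {ffun T -> R^o}} | \dim W = k]].

Definition deg (x : T) : nat := #|[set y | e x y]|.

(* degrees of boundary vertices, sorted non-decreasingly;
   d_k (1-indexed) is  nth 0 (sorted_bdegrees B) k.-1 *)
Definition sorted_bdegrees (B : {set T}) : seq nat :=
  sort leq [seq deg x | x in B].

End Steklov.

(* Main.v *)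
Require Import Defs.
From HB Require Import structures.
From mathcomp Require Import all_boot all_order all_algebra.
From mathcomp Require Import boolp classical_sets reals constructive_ereal ereal.
Import Order.TTheory GRing.Theory Num.Theory.
Local Open Scope ring_scope.

Lemma pick_S (R : realType) (T : finType) (e : rel T) (B : {set T}) k :
  (1 <= k)%N -> (k <= #|B|)%N ->
  exists s : seq T, [/\ uniq s, size s = k, {subset s <= B} &
     forall x, x \in s -> (deg e x <= nth 0%N (sorted_bdegrees e B) k.-1)%N].
Proof.
move=> hk1 hkB.
set sB := sort (relpre (deg e) leq) (enum B).
have hsort : sorted_bdegrees e B = map (deg e) sB.
  by rewrite /sorted_bdegrees sort_map.
have szB : size sB = #|B| by rewrite size_sort cardE.
exists (take k sB); split.
- by rewrite take_uniq // sort_uniq enum_uniq.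
- by rewrite size_take szB; case: ltnP => // h; apply/eqP; rewrite eqn_leq h hkB.
- by move=> x /mem_take; rewrite mem_sort mem_enum.
move=> x xin.
have hi : (index x (take k sB) < k)%N.
  by rewrite -[X in (_ < X)%N](_ : size (take k sB) = k) ?index_mem // size_take szB; case: ltnP => // h; apply/eqP; rewrite eqn_leq h hkB.
set i := index x (take k sB) in hi *.
have xeq : x = nth x sB i by rewrite -(nth_take _ hi) nth_index.
have hsz : forall j, (j < k)%N -> (j < size sB)%N.
  by move=> j hj; rewrite szB (leq_trans hj).
rewrite {1}xeq hsort -(nth_map x 0%N) ?hsz //.
apply: (sorted_leq_nth leq_trans leqnn) => //.
- by rewrite -sort_map; apply: sort_sorted => a b; exact: leq_total.
- by rewrite inE size_map hsz.
- by rewrite inE size_map hsz // prednK.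
- by rewrite -ltnS prednK.
Qed.
Lemma dir_eq (R : realType) (T : finType) (e : rel T)
  (e_sym : symmetric e) (e_irr : irreflexive e) (f : {ffun T -> R^o}) :
  (forall x y, e x y -> f x * f y = 0) ->
  dirichlet e f = \sum_x (deg e x)%:R * f x ^+ 2.
Proof.
move=> hf; rewrite /dirichlet.
set g := fun x => f x ^+ 2.
transitivity (\sum_x \sum_(y | (enum_rank x < enum_rank y)%N && e x y) (g x + g y)).
  apply: eq_bigr => x _; apply: eq_bigr => y /andP[_ hxy].
  by rewrite sqrrB (hf _ _ hxy) mul0rn subr0.
transitivity (\sum_x \sum_y ((if (enum_rank x < enum_rank y)%N && e x y then g x else 0)
    + (if (enum_rank y < enum_rank x)%N && e y x then g x else 0))).
  under eq_bigr do rewrite big_split.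
  rewrite big_split /=.
  under [RHS]eq_bigr do rewrite big_split.
  rewrite [RHS]big_split /=.
  congr (_ + _).
    by apply: eq_bigr => x _; rewrite big_mkcond.
  under eq_bigr do rewrite big_mkcond.
  by rewrite exchange_big.
apply: eq_bigr => x _.
transitivity (\sum_y (if e x y then g x else 0)).
  apply: eq_bigr => y _; rewrite (e_sym y x).
  case exy: (e x y); last by rewrite !andbF addr0.
  rewrite !andbT; case: (ssrnat.ltngtP (enum_rank x) (enum_rank y)) => h; rewrite ?addr0 ?add0r //.
  have xy : x = y by move/ord_inj/enum_rank_inj: h.
  by move: exy; rewrite xy e_irr.
rewrite -big_mkcond /= (eq_bigl (fun y => y \in [set y | e x y]%classic)); last by move=> y; apply/idP/idP; rewrite in_setE /=.
by rewrite sumr_const mulr_natl.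
Qed.

Lemma ray_bound (R : realType) (T : finType) (e : rel T)
  (e_sym : symmetric e) (e_irr : irreflexive e) (B : {set T})
  (B_indep : forall x y, x \in B -> y \in B -> ~~ e x y)
  (s : seq T) (d : nat) (f : {ffun T -> R^o}) :
  {subset s <= B} -> (forall x, x \in s -> (deg e x <= d)%N) ->
  (forall y, y \notin s -> f y = 0) -> f != 0 ->
  (rayleigh e B f <= (d%:R)%:E)%E.
Proof.
move=> sB hdeg hf0 fnz.
have hprod : forall x y, e x y -> f x * f y = 0.
  move=> x y exy.
  case: (boolP (x \in s)) => hx; last by rewrite hf0 // mul0r.
  case: (boolP (y \in s)) => hy; last by rewrite (hf0 y) // mulr0.
  by have := B_indep _ _ (sB _ hx) (sB _ hy); rewrite exy.
have nz : ~~ [forall x in B, f x == 0].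
  apply/negP => /forall_inP H; move/negP: fnz; apply; apply/eqP/ffunP => x.
  rewrite ffunE; case: (boolP (x \in s)) => hx; [exact/eqP/H/sB | exact: hf0].
rewrite /rayleigh (negbTE nz) lee_fin.
have Npos : 0 < bnorm B f.
  move/forall_inPn: nz => [x xB fx].
  rewrite /bnorm (bigD1 x) //=.
  have h1 : 0 < f x ^+ 2 by rewrite exprn_even_gt0.
  apply: lt_le_trans h1 _; rewrite lerDl; apply: sumr_ge0 => y _; exact: sqr_ge0.
rewrite ler_pdivrMr // (@dir_eq R T e e_sym e_irr f hprod).
rewrite /bnorm mulr_sumr [X in _ <= X]big_mkcond /=; apply: ler_sum => x _.
case: (boolP (x \in s)) => hx.
  rewrite (sB _ hx); apply: ler_wpM2r; first exact: sqr_ge0.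
  by rewrite ler_nat; exact: hdeg.
rewrite hf0 // expr0n /= mulr0; case: ifP => _ //.
Qed.

Theorem mainTheorem5 (R : realType) (T : finType) (e : rel T)
  (e_sym : symmetric e) (e_irr : irreflexive e)
  (B : {set T}) (hB : (2 <= #|B|)%N)
  (B_indep : forall x y, x \in B -> y \in B -> ~~ e x y)
  (k : nat) (hk1 : (1 <= k)%N) (hkB : (k <= #|B|)%N) :
  (steklov R e B k <= (nth 0%N (sorted_bdegrees e B) k.-1)%:R%:E)%E.
Proof.
have [s [us szs sB hdeg]] := @pick_S R T e B k hk1 hkB.
have x0 : T by case: s {us sB hdeg} szs => [h|a _ _]; [rewrite -h in hk1 | exact a].
pose delta := fun x : T => ([ffun y => ((y == x)%:R : R^o)] : {ffun T -> R^o}).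
pose X := map delta s.
have freeX : free X.
  apply/(@freeP _ _ _ (in_tuple X)) => c hc i.
  have := congr1 (fun g : {ffun T -> R^o} => g (nth x0 s i)) hc.
  have hi : (i < size s)%N by rewrite -(size_map delta s) (ltn_ord i).
  rewrite sum_ffunE ffunE (bigD1 i) //= big1.
    rewrite ffunE /= (nth_map x0) // ffunE eqxx addr0 => <-. exact: (esym (mulr1 _)).
  move=> j ji.
  have hj : (j < size s)%N by rewrite -(size_map delta s) (ltn_ord j).
  rewrite ffunE /= (nth_map x0) // ffunE nth_uniq //.
  have -> : (i == j :> nat) = false by apply/negbTE; rewrite eq_sym. exact: mulr0.
have hW : \dim <<X>>%VS = k by rewrite (eqP freeX) size_map szs.
apply: le_trans (ereal_inf_lbound _) _.
  exists <<X>>%VS; first exact: hW.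
  reflexivity.
apply: ge_ereal_sup => r [f [fin fnz] <-].
apply: (@ray_bound R T e e_sym e_irr B B_indep s _ f sB hdeg) => // y ys.
rewrite (@coord_span _ _ _ (in_tuple X) f fin) sum_ffunE.
apply: big1 => i _.
have hi : (i < size s)%N by rewrite -(size_map delta s) (ltn_ord i).
rewrite ffunE /= (nth_map x0) // ffunE.
have -> : (y == nth x0 s i) = false.
  by apply/negP => /eqP hy; move: ys; rewrite hy mem_nth.
exact: mulr0.
Qed.
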